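(* Let $q$ be a prime power, $s\geq1$, $m\geq1$, $n=q^{s-1}$, and let $G$ be the $s\times n$ matrix over $\mathbb{F}_q$ whose first row is all ones and whose columns, restricted to the last $s-1$ rows, run through all vectors of $\mathbb{F}_q^{s-1}$. Let $P_i\in\mathrm{PG}(s-1,q)$ be the projective point of the $i$-th column of $G$; these are exactly the points of $\mathrm{PG}(s-1,q)$ outside the hyperplane $H: X_1=0$, and we identify $\mathrm{PG}(s-1,q)\setminus H$ with the affine space $\mathrm{AG}(s-1,q)$. Let $\mathcal{RM}_q(1,s-1)$ be the code over $\mathbb{F}_q$ generated by $G$. If $\mathbf{c}$ is a word of the extension code $\mathcal{RM}_q(1,s-1)\otimes\mathbb{F}_{q^m}$ of Hamming weight $q^{s-1}-q^{s-1-m}$, then the set $\{P_i: i\in\{1,\dots,n\}\setminus\mathrm{supp}(\mathbf{c})\}$ is exactly the set of all points of some affine subspace of $\mathrm{AG}(s-1,q)$ of codimension $m$.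
   Context: The extension code $C\otimes\mathbb{F}_{q^m}$ of a linear code $C\subseteq\mathbb{F}_q^n$ is the $\mathbb{F}_{q^m}$-linear span of $C$ in $\mathbb{F}_{q^m}^n$. The support $\mathrm{supp}(\mathbf{c})$ of a word is the set of its nonzero coordinates. Under the identification, the affine subspaces of $\mathrm{AG}(s-1,q)$ of codimension $m$ are the sets $\Pi\setminus H$ for projective subspaces $\Pi$ of codimension $m$ not contained in $H$. *)

(* Defs.v *)
From HB Require Import structures.
From mathcomp Require Import all_boot all_order all_algebra all_field.
Set Implicit Arguments. Unset Strict Implicit. Unset Printing Implicit Defensive.
Import GRing.Theory.
Local Open Scope ring_scope.

(* Columns of the generator matrix G of RM_q(1, s-1) are indexed by the
   vectors v of F^(k) (k = s-1); the column is (1, v), written as a row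
   vector of F^(1+k).  It is also a representative of the point P_v. *)
Definition RMcol (F : fieldType) (k : nat) (v : 'rV[F]_k) : 'rV[F]_(1 + k) :=
  row_mx (1 : 'rV[F]_1) v.

(* The codeword of the extension code RM_q(1,s-1) (x) L with coefficient
   vector a (an L-linear combination of the rows of G), evaluated at the
   column indexed by v. *)
Definition extWord (F : fieldType) (L : fieldExtType F) (k : nat)
    (a : 'rV[L]_(1 + k)) (v : 'rV[F]_k) : L :=
  \sum_(j < 1 + k) a ord0 j * ((RMcol v) ord0 j)%:A.

Definition extSupp (F : finFieldType) (L : fieldExtType F) (k : nat)
    (a : 'rV[L]_(1 + k)) : {set 'rV[F]_k} :=
  [set v | extWord a v != 0].

Definition firstCoord (F : fieldType) (k : nat) (u : 'rV[F]_(1 + k)) : F :=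
  u ord0 (lshift k ord0).

(* Main.v *)
Require Import Defs.
From HB Require Import structures.
From mathcomp Require Import all_boot all_order all_algebra all_field.
From mathcomp Require Import zify.
Import GRing.Theory.
Local Open Scope ring_scope.
Import VectorInternalTheory Num.Theory.

Lemma card_ker_rows (F : finFieldType) k n (B : 'M[F]_(k, n)) :
  #|[set w : 'rV[F]_k | w *m B == 0]| = (#|F| ^ (k - \rank B))%N.
Proof.
set K := kermx B; set C := row_base K.
have -> : [set w : 'rV[F]_k | w *m B == 0] = [set x *m C | x : 'rV[F]_(\rank K)].
  apply/setP => w; rewrite inE; apply/idP/imsetP.
    rewrite -sub_kermx -/K -(eq_row_base K) -/C => /submxP [x ->].
    by exists x.
  move=> [x _ ->]; rewrite -sub_kermx -/K -(eq_row_base K).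
  exact: submxMl.
rewrite card_imset; last exact: row_free_inj (row_base_free K).
by rewrite card_mx mul1n /K mxrank_ker.
Qed.

Lemma RMcol_mul (F : fieldType) k n (v : 'rV[F]_k) (A : 'M[F]_(1 + k, n)) :
  RMcol v *m A = usubmx A + v *m dsubmx A.
Proof.
by rewrite /RMcol -{1}(vsubmxK A) mul_row_col mul1mx.
Qed.

Theorem mainTheorem7 (F : finFieldType) (L : fieldExtType F) (s m : nat)
  (hs : (1 <= s)%N) (hm : (1 <= m)%N) (hL : \dim {:L} = m)
  (a : 'rV[L]_(1 + s.-1)) :
  (#|extSupp a|%:R : rat) =
     (#|F|%:R : rat) ^+ s.-1 - (#|F|%:R : rat) ^ ((s.-1)%:Z - m%:Z) ->
  exists U : 'M[F]_(1 + s.-1),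
    [/\ \rank U = ((1 + s.-1) - m)%N,
        (exists2 u : 'rV[F]_(1 + s.-1), (u <= U)%MS & firstCoord u != 0)
      & forall v : 'rV[F]_(s.-1), (v \notin extSupp a) <-> (RMcol v <= U)%MS].
Proof.
move: a; set k := s.-1 => a H.
set q := #|F|.
have q1 : (1 < q)%N by exact: finNzRing_gt1.
pose A := \matrix_(j < 1 + k) VectorInternalTheory.v2r (a ord0 j).
have keyA v : (v \notin extSupp a) = (RMcol v *m A == 0).
  rewrite inE negbK.
  have -> : RMcol v *m A = VectorInternalTheory.v2r (extWord a v).
    rewrite mulmx_sum_row /extWord. rewrite linear_sum; apply: eq_bigr => j _.
    by rewrite rowK mulr_algr linearZ.
  apply/eqP/eqP => [->|]; first by rewrite linear0.
  by rewrite -(linear0 (VectorInternalTheory.v2r : L -> _)) => /VectorInternalTheory.v2r_inj.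
set Z := ~: extSupp a.
have eZ : (#|Z| + #|extSupp a| = q ^ k)%N.
  by rewrite addnC cardsC card_mx mul1n.
have hZ : (#|Z|%:R : rat) = q%:R ^ (k%:Z - m%:Z).
  have e2 : (#|Z|%:R : rat) + #|extSupp a|%:R = q%:R ^+ k by rewrite -natrD eZ natrX.
  by rewrite -[LHS]addr0 -(subrr (#|extSupp a|%:R : rat)) addrA e2 H opprB addrC subrK.
have q0 : (q%:R : rat) != 0 by rewrite pnatr_eq0 -lt0n (ltnW q1).
have hmk : (m <= k)%N.
  rewrite leqNgt; apply/negP => km.
  move: hZ; rewrite -opprB subzn ?(ltnW km) // -invr_expz => hZ.
  have : ((#|Z| * q ^ (m - k))%N%:R : rat) = 1.
    by rewrite natrM natrX hZ mulVf // expf_neq0.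
  move/eqP; rewrite pnatr_eq1 muln_eq1 => /andP [_].
  rewrite -(expn0 q) => /eqP/(expnI q1)/eqP; rewrite subn_eq0 leqNgt km.
  by [].
have hZn' : (#|Z|%:R : rat) = (q ^ (k - m))%N%:R by rewrite hZ subzn // natrX.
have hZn : #|Z| = (q ^ (k - m))%N by apply/eqP; rewrite -(eqr_nat rat) hZn'.
have : (0 < #|Z|)%N by rewrite hZn expn_gt0 (ltnW q1).
case/card_gt0P => v0; rewrite in_setC keyA RMcol_mul => /eqP h0.
have ZE : Z = [set w + v0 | w in [set w : 'rV_k | w *m dsubmx A == 0]].
  apply/setP => v; rewrite in_setC keyA RMcol_mul; apply/idP/imsetP.
    move=> /eqP hv; exists (v - v0); last by rewrite subrK.
    rewrite inE mulmxBl; apply/eqP.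
    have : usubmx A + v *m dsubmx A = usubmx A + v0 *m dsubmx A by rewrite hv h0.
    by move/addrI => ->; rewrite subrr.
  by move=> [w]; rewrite inE => /eqP hw ->; rewrite mulmxDl hw add0r h0.
have cZ : #|Z| = (q ^ (k - \rank (dsubmx A)))%N.
  by rewrite ZE card_imset ?card_ker_rows //; exact: addIr.
have dL : dim L = m by rewrite -hL dimvf.
have r1 : \rank (dsubmx A) = m.
  have le1 : (\rank (dsubmx A) <= m)%N by rewrite -[X in (_ <= X)%N]dL rank_leq_col.
  move: cZ; rewrite hZn => /(expnI q1) e. lia.
have rA : \rank A = m.
  apply/eqP; rewrite eqn_leq; apply/andP; split.
    by rewrite -[X in (_ <= X)%N]dL rank_leq_col.
  rewrite -{1}r1; apply: mxrankS.
  have : (col_mx (usubmx A) (dsubmx A) <= A)%MS by rewrite vsubmxK submx_refl.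
  by rewrite col_mx_sub => /andP [].
exists (kermx A); split.
- by rewrite mxrank_ker rA.
- exists (RMcol v0); first by rewrite sub_kermx RMcol_mul h0.
  by rewrite /firstCoord /RMcol row_mxEl mxE eqxx oner_neq0.
- by move=> v; rewrite sub_kermx keyA.
Qed.
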